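(* Let $t \in \mathsf{Topo}$ and let $P = \{pkt_1, \dots, pkt_{|t|}\} \subseteq \mathsf{Pkt}$ be a set of $|t|$ distinct packets. For each permutation $\pi$ of $P$ there exists a well-formed PIFO tree $q_\pi \in \mathsf{PIFOTree}(t)$ such that $\mathsf{flush}(q_\pi) = \pi(pkt_{|t|}) \cdots \pi(pkt_1)$ and $\mathsf{snap}(q_\pi)$ is the list $[pkt_1, \dots, pkt_{|t|}]$ of one-letter words (i.e., the $i$-th leaf from the left holds exactly the packet $pkt_i$).
   Context: Fix a set $\mathsf{Pkt}$ of packets and a totally ordered set $\mathsf{Rk}$ of ranks (smaller is more favorable). PIFOs: for a set $S$, a PIFO over $S$ is a finite sequence of pairs $(s,r)\in S\times\mathsf{Rk}$ in insertion order; $\mathsf{PIFO}(S)$ is the set of these. $\mathsf{pop}_{\mathsf{PIFO}}(p)$ is undefined if $p$ is empty; otherwise it removes the entry of minimal rank (earliest-inserted among ties) and returns $(s,p')$. $|p|$ is the number of entries, $|p|_s$ the number with element $s$. Topologies: $\mathsf{Topo}$ is the smallest set with $*\in\mathsf{Topo}$ and $\mathsf{Node}(\vec t)\in\mathsf{Topo}$ for $n\in\mathbb{N}$, $\vec t\in\mathsf{Topo}^n$. Number of leaves: $|*|=1$, $|\mathsf{Node}(\vec t)|=\sum_i|\vec t[i]|$. PIFO trees: $\mathsf{Leaf}(p)\in\mathsf{PIFOTree}( * )$ for $p\in\mathsf{PIFO}(\mathsf{Pkt})$; $\mathsf{Internal}(\vec q,p)\in\mathsf{PIFOTree}(\mathsf{Node}(\vec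 t))$ whenever $\vec t\in\mathsf{Topo}^n$, $p\in\mathsf{PIFO}(\{1,\dots,n\})$, $\vec q[i]\in\mathsf{PIFOTree}(\vec t[i])$. $\vec q[q'/i]$ replaces the $i$-th entry by $q'$. pop (partial): $\mathsf{pop}(\mathsf{Leaf}(p))=(pkt,\mathsf{Leaf}(p'))$ if $\mathsf{pop}_{\mathsf{PIFO}}(p)=(pkt,p')$; $\mathsf{pop}(\mathsf{Internal}(\vec q,p))=(pkt,\mathsf{Internal}(\vec q[q'/i],p'))$ if $\mathsf{pop}_{\mathsf{PIFO}}(p)=(i,p')$ and $\mathsf{pop}(\vec q[i])=(pkt,q')$; undefined otherwise. Size: $|\mathsf{Leaf}(p)|=|p|$, $|\mathsf{Internal}(\vec q,p)|=\sum_i|\vec q[i]|$. Well-formedness: $\vdash\mathsf{Leaf}(p)$ always; $\vdash\mathsf{Internal}(\vec q,p)$ iff for all $i$, $\vdash\vec q[i]$ and $|p|_i=|\vec q[i]|$. Words are written by juxtaposition; $\epsilon$ is the empty word, $\cdot$ concatenation. For a PIFO $p$, $\textsc{flush}(p)$ is the word obtained by popping $p$ until empty, last popped leftmost. $\mathsf{snap}(\mathsf{Leaf}(p))=[\textsc{flush}(p)]$, $\mathsf{snap}(\mathsf{Internal}(\vec q,p))=\mathsf{snap}(\vec q[1]) +\!\!+\cdots+\!\!+\mathsf{snap}(\vec q[n])$ (list concatenation). For well-formed $q$: $\mathsf{flush}(q)=\epsilon$ if $|q|=0$, and $\mathsf{flush}(q)=\mathsf{flush}(q')\cdot pkt$ if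 $|q|>0$ and $\mathsf{pop}(q)=(pkt,q')$. *)

(* Defs.v *)
From mathcomp Require Import all_boot all_order.
Set Implicit Arguments. Unset Strict Implicit. Unset Printing Implicit Defensive.
Import Order.TTheory.
Local Open Scope order_scope.

Inductive Topo : Type := Star | Node of seq Topo.

Fixpoint leaves (t : Topo) : nat :=
  match t with Star => 1 | Node ts => sumn (map leaves ts) end.

Section PIFOTrees.
Variable Pkt : Type.
Variables (d : Order.disp_t) (Rk : orderType d).

(* A PIFO over S: sequence of (element, rank) pairs in insertion order
   (head = earliest inserted). *)
Definition PIFO (S : Type) := seq (S * Rk).

(* pop: remove the entry of minimal rank, earliest-inserted among ties. *)
Definition pifo_pop (S : Type) (p : PIFO S) : option (S * PIFO S) :=
  match p with
  | [::] => None
  | e :: p' =>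
      let m := foldl (fun r x => Order.min r x.2) e.2 p' in
      let i := find (fun x => x.2 == m) p in
      Some ((nth e p i).1, take i p ++ drop i.+1 p)
  end.

Definition pifo_count (S : eqType) (p : PIFO S) (s : S) : nat :=
  count (fun x => x.1 == s) p.

(* FLUSH(p): pop until empty, last popped leftmost (word = seq, head = leftmost). *)
Fixpoint pifo_flush_fuel (S : Type) (n : nat) (p : PIFO S) : seq S :=
  match n with
  | 0 => [::]
  | n'.+1 => match pifo_pop p with
             | Some (x, p') => rcons (pifo_flush_fuel n' p') x
             | None => [::]
             end
  end.
Definition pifo_flush (S : Type) (p : PIFO S) : seq S := pifo_flush_fuel (size p) p.

(* Untyped PIFO trees; children indices of internal PIFOs are 0-based
   (index i refers to the (i+1)-th child). *)
Inductive PTree : Type :=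
  | Leaf of PIFO Pkt
  | Internal of seq PTree & PIFO nat.

Fixpoint has_topo (q : PTree) (t : Topo) {struct q} : bool :=
  match q, t with
  | Leaf _, Star => true
  | Internal qs p, Node ts =>
      [&& size qs == size ts, all (fun x => x.1 < size ts) p
        & all2 (fun a b => has_topo a b) qs ts]
  | _, _ => false
  end.

Fixpoint pop (q : PTree) : option (Pkt * PTree) :=
  match q with
  | Leaf p => match pifo_pop p with
              | Some (x, p') => Some (x, Leaf p')
              | None => None
              end
  | Internal qs p =>
      match pifo_pop p with
      | None => None
      | Some (i, p') =>
          let fix go (qs : seq PTree) (i : nat) : option (Pkt * seq PTree) :=
            match qs, i with
            | [::], _ => None
            | q0 :: qs', 0 => match pop q0 with
                              | Some (x, q') => Some (x, q' :: qs')
                              | None => None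
                              end
            | q0 :: qs', j.+1 => match go qs' j with
                                 | Some (x, qs'') => Some (x, q0 :: qs'')
                                 | None => None
                                 end
            end in
          match go qs i with
          | Some (x, qs') => Some (x, Internal qs' p')
          | None => None
          end
      end
  end.

Fixpoint tsize (q : PTree) : nat :=
  match q with
  | Leaf p => size p
  | Internal qs _ => sumn (map tsize qs)
  end.

Fixpoint wf (q : PTree) : bool :=
  match q with
  | Leaf _ => true
  | Internal qs p =>
      all wf qs &&
      all (fun i => pifo_count p i == tsize (nth (Leaf [::]) qs i)) (iota 0 (size qs))
  end.

Fixpoint snap (q : PTree) : seq (seq Pkt) :=
  match q with
  | Leaf p => [:: pifo_flush p]
  | Internal qs _ => flatten (map snap qs)
  end.

(* flush for well-formed q: each pop of a well-formed nonempty tree succeeds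
   and decreases the size by one, so |q| pops empty the tree. *)
Fixpoint flush_fuel (n : nat) (q : PTree) : seq Pkt :=
  match n with
  | 0 => [::]
  | n'.+1 => match pop q with
             | Some (x, q') => rcons (flush_fuel n' q') x
             | None => [::]
             end
  end.
Definition flush (q : PTree) : seq Pkt := flush_fuel (tsize q) q.

End PIFOTrees.

(* Main.v *)
Require Import Defs.
From mathcomp Require Import all_boot all_order.
From mathcomp Require Import zify.
Set Implicit Arguments. Unset Strict Implicit. Unset Printing Implicit Defensive.

Fixpoint chunks (T : Type) (ts : seq Topo) (s : seq T) : seq (seq T) :=
  match ts with
  | [::] => [::]
  | t :: ts' => take (leaves t) s :: chunks ts' (drop (leaves t) s)
  end.

Definition cidx (T : eqType) (ts : seq Topo) (s : seq T) (y : T) : nat :=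
  find (fun c => y \in c) (chunks ts s).

Fixpoint build (Pkt : eqType) (d : Order.disp_t) (Rk : orderType d) (r0 : Rk)
  (t : Topo) (s o : seq Pkt) {struct t} : PTree Pkt Rk :=
  match t with
  | Star => Leaf [seq (y, r0) | y <- o & y \in s]
  | Node ts =>
    Internal ((fix go (ts : seq Topo) (s : seq Pkt) : seq (PTree Pkt Rk) :=
                match ts with
                | [::] => [::]
                | t1 :: ts' => build r0 t1 (take (leaves t1) s) o
                                 :: go ts' (drop (leaves t1) s)
                end) ts s)
             [seq (cidx ts s y, r0) | y <- o & y \in s]
  end.

Fixpoint bgo (Pkt : eqType) (d : Order.disp_t) (Rk : orderType d) (r0 : Rk)
  (o : seq Pkt) (ts : seq Topo) (s : seq Pkt) : seq (PTree Pkt Rk) :=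
  match ts with
  | [::] => [::]
  | t1 :: ts' => build r0 t1 (take (leaves t1) s) o :: bgo r0 o ts' (drop (leaves t1) s)
  end.

Lemma build_Node (Pkt : eqType) d (Rk : orderType d) (r0 : Rk) ts (s o : seq Pkt) :
  build r0 (Node ts) s o = Internal (bgo r0 o ts s) [seq (cidx ts s y, r0) | y <- o & y \in s].
Proof.
rewrite /=; congr Internal.
elim: ts s => [//|t ts IH] s /=.
by rewrite IH.
Qed.

Definition popgo (Pkt : Type) d (Rk : orderType d) :=
  fix go (qs : seq (PTree Pkt Rk)) (i : nat) : option (Pkt * seq (PTree Pkt Rk)) :=
  match qs, i with
  | [::], _ => None
  | q0 :: qs', 0 => match pop q0 with
                    | Some (x, q') => Some (x, q' :: qs')
                    | None => None
                    end
  | q0 :: qs', j.+1 => match go qs' j with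
                       | Some (x, qs'') => Some (x, q0 :: qs'')
                       | None => None
                       end
  end.

Lemma pop_Internal (Pkt : Type) d (Rk : orderType d) (qs : seq (PTree Pkt Rk)) p :
  pop (Internal qs p) =
  match pifo_pop p with
  | None => None
  | Some (i, p') => match popgo qs i with
                    | Some (x, qs') => Some (x, Internal qs' p')
                    | None => None
                    end
  end.
Proof. reflexivity. Qed.

Lemma Topo_ind' (P : Topo -> Prop) :
  P Star -> (forall ts, (forall i, i < size ts -> P (nth Star ts i)) -> P (Node ts)) ->
  forall t, P t.
Proof.
move=> HS HN; fix IH 1; intros t; destruct t as [|ts]; first exact HS.
apply: HN.
induction ts as [|t ts IHts]; intros [|i] Hi; try discriminate.
  exact: IH.
apply: IHts; exact Hi.
Qed.

Lemma pifo_pop_const (S : Type) d (Rk : orderType d) (r0 : Rk) (a : S) (l : PIFO Rk S) :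
  all (fun e => e.2 == r0) l -> pifo_pop ((a, r0) :: l) = Some (a, l).
Proof.
move=> Hl; rewrite /pifo_pop.
have ->: foldl (fun r x => Order.min r x.2) r0 l = r0.
  elim: l Hl => //= [[b r] l IH] /andP[/eqP/= -> H].
  by rewrite Order.POrderTheory.minxx IH.
by rewrite /= eqxx /= drop0.
Qed.

Lemma allr0 (S T : Type) d (Rk : orderType d) (r0 : Rk) (g : T -> S) (l : seq T) :
  all (fun e : S * Rk => e.2 == r0) [seq (g y, r0) | y <- l].
Proof. by elim: l => //= y l ->; rewrite eqxx. Qed.

Lemma popgo_nth (Pkt : Type) d (Rk : orderType d) (qs : seq (PTree Pkt Rk)) i :
  popgo qs i = if i < size qs then
                 match pop (nth (Leaf [::]) qs i) with
                 | Some (x, q') => Some (x, set_nth (Leaf [::]) qs i q')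
                 | None => None end
               else None.
Proof.
elim: qs i => [|q qs IH] [|i] //=.
rewrite IH ltnS; case: ifP => // _.
by case: pop => [[x q']|].
Qed.


Lemma size_chunks (T : Type) ts (s : seq T) : size (chunks ts s) = size ts.
Proof. by elim: ts s => //= t ts IH s; rewrite IH. Qed.

Lemma nth_chunk_sub (T : eqType) ts (s : seq T) i y :
  y \in nth [::] (chunks ts s) i -> y \in s.
Proof.
elim: ts s i => [|t ts IH] s [|i] //=; first exact: mem_take.
by move/IH; apply: mem_drop.
Qed.

Lemma flatten_chunks (T : Type) ts (s : seq T) :
  size s = sumn (map leaves ts) -> flatten (chunks ts s) = s.
Proof.
elim: ts s => /= [s Hs|t ts IH s Hs]; first by apply/esym/size0nil.
by rewrite IH ?cat_take_drop // size_drop Hs addKn.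
Qed.

Lemma uniq_nth_chunk (T : eqType) ts (s : seq T) i :
  uniq s -> uniq (nth [::] (chunks ts s) i).
Proof.
elim: ts s i => [|t ts IH] s [|i] //= Hu; first exact: take_uniq.
by apply: IH; apply: drop_uniq.
Qed.

Lemma size_nth_chunk (T : Type) ts (s : seq T) i :
  size s = sumn (map leaves ts) -> i < size ts ->
  size (nth [::] (chunks ts s) i) = leaves (nth Star ts i).
Proof.
elim: ts s i => [|t ts IH] s [|i] //= Hs Hi.
  by rewrite size_takel // Hs leq_addr.
by apply: IH => //; rewrite size_drop Hs addKn.
Qed.

Lemma cidx_mem (T : eqType) ts (s : seq T) i y :
  uniq s -> y \in nth [::] (chunks ts s) i -> cidx ts s y = i.
Proof.
rewrite /cidx.
elim: ts s i => [|t ts IH] s [|i] //= Hu Hy; first by rewrite Hy.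
have Hd : y \in drop (leaves t) s := nth_chunk_sub Hy.
have Hn : y \notin take (leaves t) s.
  move: Hu; rewrite -{1}(cat_take_drop (leaves t) s) cat_uniq => /and3P[_ Hdis _].
  apply/negP => Ht; move/negP: Hdis; apply; apply/hasP; exists y; [exact: Hd | exact: Ht].
rewrite (negbTE Hn); congr S; apply: IH Hy.
exact: drop_uniq.
Qed.

Lemma has_chunk (T : eqType) ts (s : seq T) y :
  size s = sumn (map leaves ts) -> y \in s -> has (fun c => y \in c) (chunks ts s).
Proof.
move=> Hs; rewrite -{1}(flatten_chunks Hs) => /flattenP[c Hc Hyc].
by apply/hasP; exists c.
Qed.

Lemma cidx_lt (T : eqType) ts (s : seq T) y :
  size s = sumn (map leaves ts) -> y \in s -> cidx ts s y < size ts.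
Proof.
by move=> Hs Hy; rewrite /cidx -(size_chunks ts s) -has_find has_chunk.
Qed.

Lemma mem_chunk_cidx (T : eqType) ts (s : seq T) y :
  size s = sumn (map leaves ts) -> y \in s ->
  y \in nth [::] (chunks ts s) (cidx ts s y).
Proof.
by move=> Hs Hy; have := nth_find [::] (has_chunk Hs Hy).
Qed.

Lemma count_chunk (T : eqType) ts (s : seq T) i (o : seq T) :
  uniq s -> size s = sumn (map leaves ts) ->
  count (fun y => y \in nth [::] (chunks ts s) i) o =
  count (fun y => (y \in s) && (cidx ts s y == i)) o.
Proof.
move=> Hu Hs; apply: eq_count => y /=; apply/idP/andP.
  move=> Hy; split; first exact: nth_chunk_sub Hy.
  by rewrite (cidx_mem Hu Hy).
by case=> Hy /eqP <-; apply: mem_chunk_cidx.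
Qed.

Lemma sumn_count (T : Type) (a : pred T) (f : T -> nat) (o : seq T) n :
  sumn [seq count (fun y => a y && (f y == i)) o | i <- iota 0 n] =
  count (fun y => a y && (f y < n)) o.
Proof.
elim: n => [|n IH].
  by rewrite /=; elim: o => //= y o <-; rewrite andbF.
rewrite -addn1 iotaD map_cat sumn_cat IH /= addn0 add0n.
rewrite addn1.
have -> : count (fun y => a y && (f y < n.+1)) o =
          count (fun y => a y && ((f y == n) || (f y < n))) o.
  by apply: eq_count => z; rewrite ltnS leq_eqVlt.
clear IH; elim: o => //= y o IHo.
case: (a y) => /=; last lia.
case: (ltngtP (f y) n) => _ /=; lia.
Qed.

Lemma size_bgo (Pkt : eqType) d (Rk : orderType d) (r0 : Rk) o ts (s : seq Pkt) :
  size (bgo r0 o ts s) = size ts.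
Proof. by elim: ts s => //= t ts IH s; rewrite IH. Qed.

Lemma nth_bgo (Pkt : eqType) d (Rk : orderType d) (r0 : Rk) o ts (s : seq Pkt) i :
  i < size ts ->
  nth (Leaf [::]) (bgo r0 o ts s) i = build r0 (nth Star ts i) (nth [::] (chunks ts s) i) o.
Proof. by elim: ts s i => [|t ts IH] s [|i] //= Hi; rewrite IH. Qed.

Lemma bgo_eq (Pkt : eqType) d (Rk : orderType d) (r0 : Rk) o ts (s : seq Pkt) :
  bgo r0 o ts s =
  [seq build r0 (nth Star ts i) (nth [::] (chunks ts s) i) o | i <- iota 0 (size ts)].
Proof.
apply: (eq_from_nth (x0 := Leaf [::])); first by rewrite size_map size_iota size_bgo.
move=> i; rewrite size_bgo => Hi.
by rewrite nth_bgo // (nth_map 0) ?size_iota // nth_iota.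
Qed.

Lemma all2_nthI (A B : Type) (r : A -> B -> bool) (x0 : A) (y0 : B) xs ys :
  size xs = size ys -> (forall i, i < size xs -> r (nth x0 xs i) (nth y0 ys i)) ->
  all2 r xs ys.
Proof.
elim: xs ys => [|x xs IH] [|y ys] //= [Hs] H.
rewrite (H 0) //=; apply: IH => // i Hi; exact: (H i.+1).
Qed.

Lemma build_Star (Pkt : eqType) d (Rk : orderType d) (r0 : Rk) (s o : seq Pkt) :
  build r0 Star s o = Leaf [seq (y, r0) | y <- o & y \in s].
Proof. by []. Qed.

Lemma pop_Leaf (Pkt : Type) d (Rk : orderType d) (p : PIFO Rk Pkt) :
  pop (Leaf p) = match pifo_pop p with
                 | Some (x, p') => Some (x, Leaf p')
                 | None => None end.
Proof. by []. Qed.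

Lemma build_notin (Pkt : eqType) d (Rk : orderType d) (r0 : Rk) t :
  forall (s o : seq Pkt) x, x \notin s -> build r0 t s (x :: o) = build r0 t s o.
Proof.
elim/Topo_ind': t => [|ts IH] s o x Hx.
  by rewrite /= (negbTE Hx).
rewrite !build_Node /= (negbTE Hx) !bgo_eq; congr Internal.
apply/eq_in_map => i; rewrite mem_iota => /andP[_ Hi].
apply: IH => //; apply/negP => /nth_chunk_sub; exact/negP.
Qed.

Lemma pop_build (Pkt : eqType) d (Rk : orderType d) (r0 : Rk) t :
  forall (s o : seq Pkt) x, uniq s -> size s = leaves t -> x \in s ->
  pop (build r0 t s (x :: o)) = Some (x, build r0 t s o).
Proof.
elim/Topo_ind': t => [|ts IH] s o x Hu Hs Hx.
  by rewrite build_Star pop_Leaf [filter _ (x :: o)]/= Hx map_cons pifo_pop_const ?allr0.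
rewrite build_Node pop_Internal [filter _ (x :: o)]/= Hx map_cons pifo_pop_const ?allr0 //.
have Hlt := cidx_lt Hs Hx.
rewrite popgo_nth size_bgo Hlt nth_bgo // IH //; first last.
- exact: mem_chunk_cidx.
- by rewrite size_nth_chunk.
- exact: uniq_nth_chunk.
rewrite build_Node; congr (Some (_, Internal _ _)).
apply: (eq_from_nth (x0 := Leaf [::])).
  by rewrite size_set_nth !size_bgo; apply/maxn_idPr.
move=> j; rewrite size_set_nth size_bgo (maxn_idPr Hlt) => Hj.
rewrite nth_set_nth /=; case: eqP => [->|Hne]; first by rewrite nth_bgo.
rewrite !nth_bgo // build_notin //; apply/negP => Hxj.
by apply: Hne; rewrite (cidx_mem Hu Hxj).
Qed.

Lemma tsize_build (Pkt : eqType) d (Rk : orderType d) (r0 : Rk) t :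
  forall (s o : seq Pkt), uniq s -> size s = leaves t ->
  Defs.tsize (build r0 t s o) = count (fun y => y \in s) o.
Proof.
elim/Topo_ind': t => [|ts IH] s o Hu Hs.
  by rewrite /= size_map size_filter.
rewrite build_Node /= bgo_eq -map_comp.
rewrite (eq_in_map _ (fun i => count (fun y => (y \in s) && (cidx ts s y == i)) o) _).1; last first.
  move=> i; rewrite mem_iota => /andP[_ Hi] /=.
  rewrite IH //; last by rewrite size_nth_chunk.
  - exact: count_chunk.
  - exact: uniq_nth_chunk.
rewrite sumn_count; apply: eq_count => y /=.
by case Hy: (y \in s) => //=; rewrite cidx_lt.
Qed.

Lemma wf_build (Pkt : eqType) d (Rk : orderType d) (r0 : Rk) t :
  forall (s o : seq Pkt), uniq s -> size s = leaves t -> wf (build r0 t s o).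
Proof.
elim/Topo_ind': t => [|ts IH] s o Hu Hs; first by [].
rewrite build_Node /=; apply/andP; split.
  rewrite bgo_eq all_map; apply/allP => i; rewrite mem_iota => /andP[_ Hi] /=.
  apply: IH => //; first exact: uniq_nth_chunk.
  by rewrite size_nth_chunk.
rewrite size_bgo; apply/allP => i; rewrite mem_iota => /andP[_ Hi].
rewrite nth_bgo // tsize_build; last by rewrite size_nth_chunk.
  rewrite count_chunk // /pifo_count count_map count_filter.
  by apply/eqP/eq_count => y /=; rewrite andbC.
exact: uniq_nth_chunk.
Qed.

Lemma has_topo_build (Pkt : eqType) d (Rk : orderType d) (r0 : Rk) t :
  forall (s o : seq Pkt), size s = leaves t -> has_topo (build r0 t s o) t.
Proof.
elim/Topo_ind': t => [|ts IH] s o Hs; first by [].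
rewrite build_Node /= size_bgo eqxx /=; apply/andP; split.
  rewrite all_map; apply/allP => y; rewrite mem_filter => /andP[Hy _] /=.
  exact: cidx_lt.
apply: (@all2_nthI _ _ (fun a b => has_topo a b) (Leaf [::]) Star); first by rewrite size_bgo.
move=> i; rewrite size_bgo => Hi; rewrite nth_bgo //.
by apply: IH => //; rewrite size_nth_chunk.
Qed.

Lemma snap_build (Pkt : eqType) d (Rk : orderType d) (r0 : Rk) t :
  forall (s o : seq Pkt), uniq s -> size s = leaves t -> uniq o -> {subset s <= o} ->
  snap (build r0 t s o) = map (fun x => [:: x]) s.
Proof.
elim/Topo_ind': t => [|ts IH] s o Hu Hs Ho Hso.
  case: s Hu Hs Hso => [|a [|b s]] //= Hu Hs Hso.
  have Ha : a \in o by apply: Hso; rewrite inE eqxx.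
  have -> : [seq y <- o | y \in [:: a]] = [:: a].
    apply: etrans (filter_pred1_uniq Ho Ha); apply: eq_filter => y; by rewrite inE.
  by rewrite /pifo_flush /= eqxx.
rewrite build_Node /= bgo_eq -map_comp.
rewrite (eq_in_map _ (fun i => map (fun x => [:: x]) (nth [::] (chunks ts s) i)) _).1; last first.
  move=> i; rewrite mem_iota => /andP[_ Hi] /=.
  apply: IH => //.
  - exact: uniq_nth_chunk.
  - by rewrite size_nth_chunk.
  - by move=> y /nth_chunk_sub; apply: Hso.
rewrite map_comp -map_flatten -(size_chunks ts s).
by rewrite [map _ (iota _ _)](mkseq_nth [::]) flatten_chunks.
Qed.

Lemma flush_fuel_S (Pkt : Type) d (Rk : orderType d) n (q : PTree Pkt Rk) :
  flush_fuel n.+1 q = match pop q with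
                      | Some (x, q') => rcons (flush_fuel n q') x
                      | None => [::] end.
Proof. by []. Qed.

Lemma flush_build (Pkt : eqType) d (Rk : orderType d) (r0 : Rk) t (s o : seq Pkt) :
  uniq s -> size s = leaves t -> {subset o <= s} ->
  flush_fuel (size o) (build r0 t s o) = rev o.
Proof.
move=> Hu Hs; elim: o => [|x o IH] Hsub //=.
rewrite pop_build //; last by apply: Hsub; rewrite inE eqxx.
rewrite IH ?rev_cons // => y Hy; apply: Hsub; by rewrite inE Hy orbT.
Qed.

Theorem lemma4p8 (Pkt : eqType) (d : Order.disp_t) (Rk : orderType d) (r0 : Rk)
    (t : Topo) (pkts : seq Pkt) :
  uniq pkts -> size pkts = leaves t ->
  forall pi : Pkt -> Pkt,
    {in pkts, forall x, pi x \in pkts} -> {in pkts &, injective pi} ->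
  exists q : PTree Pkt Rk,
    [/\ has_topo q t, wf q,
        flush q = rev (map pi pkts)
      & snap q = map (fun x => [:: x]) pkts].
Proof.
move=> Hu Hs pi Hin Hinj.
set o := map pi pkts.
have Hou : uniq o by rewrite map_inj_in_uniq.
have Hsub : {subset o <= pkts} by move=> y /mapP[x Hx ->]; exact: Hin.
have [_ E] := uniq_min_size Hou Hsub (eq_leq (esym (size_map pi pkts))).
have Hsub2 : {subset pkts <= o} by move=> y; rewrite E.
exists (build r0 t pkts o); split.
- exact: has_topo_build.
- exact: wf_build.
- rewrite /flush tsize_build //.
  have -> : count (fun y => y \in pkts) o = size o.
    by apply/eqP; rewrite -all_count; apply/allP.
  exact: flush_build.
- exact: snap_build.
Qed.
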